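(* Let $n\in\mathbb{N}$ and $\ell\in\{a,a^{-1},b,b^{-1}\}$. If $w\in\ell I_n\setminus I_n$, then $w$ begins with $\ell$.
   Context: $\mathbb{F}$ is the free group on generators $a,b$ with identity $e$. For $n=4k+i$ with $k\in\mathbb{N}$ and $0\le i<4$, set $\ell_n=a,a^{-1},b,b^{-1}$ according as $i=0,1,2,3$. For $g\in\mathbb{F}$ and $S\subseteq\mathbb{F}$ let $gS=\{gs:s\in S\}$. Define $I_0=\{e\}$ and $I_{n+1}=I_n\cup\ell_nI_n$. For $w\in\mathbb{F}$, $\overline{w}$ is its reduced word and $*$ is concatenation of words. An element $w$ begins with $\ell$ if $\overline{w}=\overline{\ell}*\overline{u}$ for some $u\in\mathbb{F}$. *)

(* Defs.v *)
(* The free group F on {a,b} is modelled as the type of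
   freely reduced words over the alphabet {a, a^-1, b, b^-1}, with product
   given by free reduction of the concatenation. *)
From mathcomp Require Import all_boot.
Set Implicit Arguments. Unset Strict Implicit. Unset Printing Implicit Defensive.

(* A letter is (generator, inverted?): generator false = a, true = b. *)
Definition letter := (bool * bool)%type.
Definition la : letter := (false, false).
Definition la_inv : letter := (false, true).
Definition lb : letter := (true, false).
Definition lb_inv : letter := (true, true).
Definition linv (x : letter) : letter := (x.1, ~~ x.2).

Definition nocancel (x y : letter) : bool := y != linv x.
Definition reducedb (w : seq letter) : bool := sorted nocancel w.

Definition push (x : letter) (acc : seq letter) : seq letter :=
  match acc with
  | y :: t => if y == linv x then t else x :: acc
  | [::] => [:: x]
  end.
Definition reduce (w : seq letter) : seq letter := foldr push [::] w.

Lemma reduce_reduced w : reducedb (reduce w).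
Proof.
elim: w => [|x w IH] //=.
rewrite /push; case: (reduce w) IH => [|y t] //= H.
case: ifP => [_|/negbT Hy]; first exact: (path_sorted H).
by rewrite /reducedb /= /nocancel Hy.
Qed.

(* The free group F: elements are reduced words; val w is \overline{w}. *)
Definition F := {w : seq letter | reducedb w}.
Definition Fmk (w : seq letter) : F := exist _ (reduce w) (reduce_reduced w).
Definition Fmul (g h : F) : F := Fmk (val g ++ val h).
Definition Fe : F := exist _ [::] is_true_true.
Definition gen (x : letter) : F := Fmk [:: x].

Definition ell (n : nat) : letter :=
  match n %% 4 with
  | 0 => la | 1 => la_inv | 2 => lb | _ => lb_inv
  end.

Definition Fset := F -> Prop.
Definition lmulset (g : F) (S : Fset) : Fset := fun x => exists2 s, S s & x = Fmul g s.

Fixpoint I (n : nat) : Fset :=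
  match n with
  | 0 => fun x => x = Fe
  | k.+1 => fun x => I k x \/ lmulset (gen (ell k)) (I k) x
  end.

Definition begins_with (l : F) (w : F) : Prop :=
  exists u : F, val w = val l ++ val u.

(* Main.v *)
Require Import Defs.
From mathcomp Require Import all_boot.

Lemma reduce_id w : reducedb w -> reduce w = w.
Proof.
elim: w => [|x w IH] //= H.
have Hw : reducedb w by exact: (path_sorted H).
rewrite IH //. case: w H {IH Hw} => [|y t] //= /andP [Hxy _].
by rewrite /nocancel in Hxy; rewrite (negbTE Hxy).
Qed.

Lemma val_mul_gen l s : val (Fmul (gen l) s) = push l (val s).
Proof. by rewrite /Fmul /= (@reduce_id (val s) (valP s)). Qed.

Lemma tail_in n : forall (s : F) x t (Ht : reducedb t),
  I n s -> val s = x :: t -> I n (exist _ t Ht).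
Proof.
elim: n => [|n IH] s x t Ht /=.
  by move=> -> .
case=> [Hs E|[s' Hs' ->] E]; first by left; exact: IH Hs E.
move: E; rewrite val_mul_gen /push.
case Es': (val s') => [|y t'].
  case=> _ Et; left.
  have -> : exist (fun w => reducedb w) t Ht = s' by apply: val_inj; rewrite /= Es' -Et.
  by [].
case: ifP => Hy E.
  have Ht' : reducedb t' by have := valP s'; rewrite Es' => /path_sorted.
  have H1 := IH s' y t' Ht' Hs' Es'.
  left; apply: (IH _ x t Ht H1); by rewrite /= E.
case: E => _ Et; left.
have -> : exist (fun w => reducedb w) t Ht = s' by apply: val_inj; rewrite /= Es' Et.
by [].
Qed.

Theorem lemma2p3 (n : nat) (l : letter) (w : F) :
  lmulset (gen l) (I n) w -> ~ I n w -> begins_with (gen l) w.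
Proof.
move=> [s Hs ->] Hn.
exists s.
rewrite val_mul_gen /push /=.
case Es: (val s) => [|y t] //.
case: ifP => // Hy; exfalso; apply: Hn.
have Ht : reducedb t by have := valP s; rewrite Es => /path_sorted.
have H1 := @tail_in n s y t Ht Hs Es.
have -> : Fmul (gen l) s = exist _ t Ht.
  by apply: val_inj; rewrite val_mul_gen /push Es Hy.
by [].
Qed.
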